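(* Let $P(Y)\in R[Y]$ be an $m$-triangular polynomial of degree $d$ and $Q(Y)\in R[Y]$ an $n$-triangular polynomial of degree $e$. Then: (1) if $d=e$ and $m=n$, then $P(Y)+Q(Y)$ is $m$-triangular; (2) $P(Y)Q(Y)$ is $(m+n)$-triangular.
   Context: Fix a positive integer $a$ and variables $u_0,\ldots,u_a$. Let $R=\mathbb{C}[u_0,\ldots,u_{a-1}][u_a,u_a^{-1}]$. $\mathbb{Q}_+$ denotes the positive rational numbers. For an integer $m\ge1$, a polynomial $P(Y)=\sum_{l=0}^dp_lY^l\in R[Y]$ of degree $d\ge a$ is called $m$-triangular if for every $l$ with $d-a\le l\le d$ one has $p_l=q_lu_a^{m-1}u_{a-d+l}+P_l(u_{a-d+l+1},\ldots,u_a)$ for some $q_l\in\mathbb{Q}_+$ and some polynomial $P_l\in\mathbb{C}[u_{a-d+l+1},\ldots,u_a]$ (for $l=d$ this means $p_d=q_du_a^m$). *)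

(* Defs.v *)
From mathcomp Require Import all_boot all_algebra fraction.
From mathcomp Require Import complex Rstruct.
From mathcomp Require Import mpoly.
Import GRing.Theory.
Local Open Scope ring_scope.

Definition CC : fieldType := complex Rdefinitions.R.

(* Polynomials C[u_0,...,u_a]; the variable u_i is 'X_i with i : 'I_a.+1. *)
Definition Pol (a : nat) := {mpoly CC[a.+1]}.

(* Ambient field: rational functions in u_0,...,u_a.  The ring
   R = C[u_0,...,u_{a-1}][u_a, u_a^{-1}] is the subring of elements p / u_a^k. *)
Definition Frac (a : nat) := {fraction Pol a}.

Definition toF {a : nat} (p : Pol a) : Frac a := @FracField.tofrac (Pol a) p.
Local Notation "x %:F" := (toF x).

Definition u (a : nat) (i : nat) : Pol a := 'X_(inord i : 'I_a.+1).

Definition inR (a : nat) (x : Frac a) : Prop :=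
  exists (p : Pol a) (k : nat), x = p%:F / ((u a a) ^+ k)%:F.

Definition only_vars_above {a : nat} (j : nat) (p : Pol a) : Prop :=
  forall mon, mon \in msupp p -> forall i : 'I_a.+1, (i <= j)%N -> mon i = 0%N.

Definition triangular (a m d : nat) (P : {poly Frac a}) : Prop :=
  [/\ size P = d.+1, (a <= d)%N,
      (forall l, inR a (P`_l)) &
      forall l : nat, (d - a <= l <= d)%N ->
        exists q : rat, 0 < q /\
        exists Pl : Pol a,
          only_vars_above (a + l - d) Pl /\ (l = d -> Pl = 0) /\
          P`_l = ratr q * ((u a a) ^+ (m - 1) * u a (a + l - d))%:F + Pl%:F].

(* Main.v *)
Require Import Defs.
From mathcomp Require Import all_boot all_algebra.
From mathcomp Require Import complex Rstruct.
From mathcomp Require Import mpoly.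
From mathcomp Require Import fraction order ring zify.
Import Order.TTheory GRing.Theory Num.Theory.
Local Open Scope ring_scope.

Section Helpers.
Variable a : nat.
Local Notation Pa := (Pol a).
Local Notation Fa := (Frac a).

Definition rC (q : rat) : Pa := (ratr q : CC)%:MP.

Lemma ratrF q : (ratr q : Fa) = toF (rC q).
Proof. rewrite /toF /rC. have := fmorph_rat (@tofrac (Pol a) \o (@mpolyC a.+1 CC)) q. simpl. by []. Qed.

Lemma rCD q r : rC (q + r) = rC q + rC r.
Proof.
rewrite /rC -mpolyCD; congr (_%:MP).
change ((ratr (q + r) : complex Rdefinitions.R) = ratr q + ratr r).
by rewrite rmorphD.
Qed.

Lemma rCM q r : rC (q * r) = rC q * rC r.
Proof.
rewrite /rC -mpolyCM; congr (_%:MP).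
change ((ratr (q * r) : complex Rdefinitions.R) = ratr q * ratr r).
by rewrite rmorphM.
Qed.

Lemma rC_neq0 q : 0 < q -> rC q != 0.
Proof.
move=> hq; rewrite /rC mpolyC_eq0.
change ((ratr q : complex Rdefinitions.R) != 0).
by rewrite fmorph_eq0 gt_eqF.
Qed.

Lemma toFD (p q : Pa) : toF (p + q) = toF p + toF q.
Proof. by rewrite /toF rmorphD. Qed.
Lemma toFM (p q : Pa) : toF (p * q) = toF p * toF q.
Proof. by rewrite /toF rmorphM. Qed.
Lemma toFX (p : Pa) k : toF (p ^+ k) = toF p ^+ k.
Proof. by rewrite /toF rmorphXn. Qed.
Lemma toF0 : toF (0 : Pa) = 0.
Proof. by rewrite /toF rmorph0. Qed.
Lemma toF_eq0 (p : Pa) : (toF p == 0) = (p == 0).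
Proof. by rewrite /toF tofrac_eq0. Qed.

Lemma u_neq0 i : u a i != 0.
Proof.
apply/eqP => h.
have : msupp (u a i) = [:: U_(inord i : 'I_a.+1)%MM] by exact: msuppX.
by rewrite h -mpolyC0 msupp0.
Qed.

Lemma ova0 j : only_vars_above j (0 : Pa).
Proof. by move=> mon; rewrite -mpolyC0 msupp0. Qed.

Lemma ovaD j (p q : Pa) : only_vars_above j p -> only_vars_above j q ->
  only_vars_above j (p + q).
Proof.
move=> hp hq mon /msuppD_le; rewrite mem_cat => /orP [] h.
  exact: hp. exact: hq.
Qed.

Lemma ovaM j (p q : Pa) : only_vars_above j p -> only_vars_above j q ->
  only_vars_above j (p * q).
Proof.
move=> hp hq mon /msuppM_le /allpairsP [[m1 m2] [h1 h2 ->]] i hi /=.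
by rewrite mnmDE (hp _ h1 _ hi) (hq _ h2 _ hi).
Qed.

Lemma ovaC j (c : CC) : only_vars_above j (c%:MP : Pa).
Proof.
move=> mon; rewrite msuppC; case: eqP => _ //.
by rewrite mem_seq1 => /eqP -> i _; exact: mnm0E.
Qed.

Lemma ovaX j i : (j < i <= a)%N -> only_vars_above j (u a i).
Proof.
move=> hji mon; rewrite /u msuppX mem_seq1 => /eqP -> i' hi'.
rewrite mnm1E; case: eqP => // e.
have := congr1 val e; rewrite /= inordK; lia.
Qed.

Lemma ovaXn j (p : Pa) k : only_vars_above j p -> only_vars_above j (p ^+ k).
Proof.
move=> hp; elim: k => [|k IH]; first by rewrite expr0 -mpolyC1; apply: ovaC.
by rewrite exprS; apply: ovaM.
Qed.

Lemma ova_mono j j' (p : Pa) : (j' <= j)%N -> only_vars_above j p ->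
  only_vars_above j' p.
Proof. by move=> hj hp mon hm i hi; apply: hp hm i (leq_trans hi hj). Qed.

Definition Aset j (x : Fa) := exists p : Pa, only_vars_above j p /\ x = toF p.

Lemma inR0 : inR a 0.
Proof. by exists 0, 0%N; rewrite toF0 mul0r. Qed.

Lemma inRD x y : inR a x -> inR a y -> inR a (x + y).
Proof.
move=> [p [k ->]] [p' [k' ->]].
exists (p * u a a ^+ k' + p' * u a a ^+ k), (k + k')%N.
have hX : toF (u a a) != 0 by rewrite toF_eq0 u_neq0.
by rewrite !toFX addf_div ?expf_neq0 // toFD !toFM !toFX exprD.
Qed.

Lemma inRM x y : inR a x -> inR a y -> inR a (x * y).
Proof.
move=> [p [k ->]] [p' [k' ->]].
exists (p * p'), (k + k')%N.
by rewrite mulf_div !toFM !toFX exprD.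
Qed.

End Helpers.

Lemma tr_coef a m d (P : {poly Frac a}) l : triangular a m d P ->
  (d - a <= l <= d)%N -> exists q : rat, 0 < q /\ exists Pl : Pol a,
  only_vars_above (a + l - d) Pl /\ (l = d -> Pl = 0) /\
  P`_l = toF (rC a q * (u a a ^+ (m - 1) * u a (a + l - d)) + Pl).
Proof.
case=> _ _ _ H hl; have [q [hq [Pl [h1 [h2 ->]]]]] := H l hl.
exists q; split=> //; exists Pl; split=> //; split=> //.
by rewrite !toFD !toFM ratrF.
Qed.

Lemma trAset a m d (P : {poly Frac a}) l i : triangular a m d P ->
  (d - a <= l <= d)%N -> (i < a + l - d)%N -> Aset a i P`_l.
Proof.
move=> hP hl hi; have [q [_ [Pl [h1 [_ ->]]]]] := @tr_coef a m d P l hP hl.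
exists (rC a q * (u a a ^+ (m - 1) * u a (a + l - d)) + Pl); split=> //.
apply: ovaD; last by apply: ova_mono h1; lia.
apply: ovaM; first exact: ovaC.
apply: ovaM; first by apply: ovaXn; apply: ovaX; lia.
by apply: ovaX; lia.
Qed.

Lemma coef_window (R : nzRingType) (P Q : {poly R}) d e k :
  size P = d.+1 -> size Q = e.+1 -> (k <= d)%N -> (k <= e)%N ->
  (P * Q)`_(d + e - k) = \sum_(d - k <= j < d.+1) P`_j * Q`_(d + e - k - j).
Proof.
move=> hP hQ hkd hke.
rewrite coefM -(big_mkord xpredT (fun j => P`_j * Q`_(d + e - k - j))).
rewrite (@big_cat_nat _ _ _ d.+1) //=; last by lia.
have -> : \sum_(d.+1 <= j < (d + e - k).+1) P`_j * Q`_(d + e - k - j) = 0.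
  rewrite big_nat_cond big1 // => j /andP [/andP [hj _] _].
  by rewrite nth_default ?mul0r // hP.
rewrite addr0 (@big_cat_nat _ _ _ (d - k)%N) //=; last by lia.
have -> : \sum_(0 <= j < d - k) P`_j * Q`_(d + e - k - j) = 0.
  rewrite big_nat_cond big1 // => j /andP [/andP [_ hj] _].
  rewrite [Q`_ _]nth_default ?mulr0 // hQ; lia.
by rewrite add0r.
Qed.

Lemma form_conv a q (V Pl : Pol a) :
  toF (rC a q * V + Pl) = ratr q * toF V + toF Pl.
Proof. by rewrite !toFD !toFM ratrF. Qed.

Theorem mainTheorem3 (a : nat) (Ha : (0 < a)%N) (m n d e : nat)
    (Hm : (0 < m)%N) (Hn : (0 < n)%N) (P Q : {poly Frac a}) :
  triangular a m d P -> triangular a n e Q ->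
  ((d = e /\ m = n) -> triangular a m d (P + Q)) /\
  triangular a (m + n) (d + e) (P * Q).
Proof.
move=> hP hQ.
have hP' := hP; have hQ' := hQ.
case: hP' => hsP hadP hinP HP; case: hQ' => hsQ haeQ hinQ HQ.
split.
- case=> hde hmn; subst e n.
  have Hsum : forall l, (d - a <= l <= d)%N -> exists q : rat, 0 < q /\
     exists Pl : Pol a,
     only_vars_above (a + l - d) Pl /\ (l = d -> Pl = 0) /\
     (P + Q)`_l = toF (rC a q * (u a a ^+ (m - 1) * u a (a + l - d)) + Pl).
    move=> l hl.
    have [q [hq [Pl [h1 [h2 e1]]]]] := @tr_coef a m d P l hP hl.
    have [q' [hq' [Ql [h1' [h2' e2]]]]] := @tr_coef a m d Q l hQ hl.
    exists (q + q'); split; first exact: addr_gt0.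
    exists (Pl + Ql); split; first exact: ovaD.
    split; first by move=> hl'; rewrite h2 // h2' // addr0.
    rewrite coefD e1 e2 rCD -toFD; congr toF; ring.
  have hdd : (d - a <= d <= d)%N by lia.
  split => //.
  + have hc : (P + Q)`_d != 0.
      have [q [hq [Pl [_ [h2 ->]]]]] := Hsum d hdd.
      rewrite h2 // addr0 toF_eq0 mulf_neq0 ?rC_neq0 //.
      by rewrite mulf_neq0 ?expf_neq0 ?u_neq0.
    apply/eqP; rewrite eqn_leq.
    have := size_polyD P Q; rewrite hsP hsQ maxnn => -> /=.
    rewrite ltnNge; apply/negP => hs; move: hc; by rewrite nth_default // eqxx.
  + by move=> l; rewrite coefD; apply: inRD.
  + move=> l hl; have [q [hq [Pl [h1 [h2 ->]]]]] := Hsum l hl.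
    exists q; split => //; exists Pl; split => //; split => //.
    exact: form_conv.
- split.
  + rewrite size_mul; first by rewrite hsP hsQ addSn addnS.
      by rewrite -size_poly_gt0 hsP.
    by rewrite -size_poly_gt0 hsQ.
  + lia.
  + move=> l; rewrite coefM; apply: (big_ind (inR a)); first exact: inR0.
      exact: inRD.
    by move=> i _; apply: inRM.
  + move=> l hl.
    have [k hk ->] : exists2 k, (k <= a)%N & l = (d + e - k)%N.
      by exists (d + e - l)%N; lia.
    have -> : (a + (d + e - k) - (d + e) = a - k)%N by lia.
    rewrite coef_window //; try lia.
    have [q0 [hq0 [P0 [_ [hP0 eP0]]]]] := @tr_coef a m d P d hP ltac:(lia).
    rewrite hP0 // addr0 addnK in eP0.
    have [r0 [hr0 [Q0 [_ [hQ0 eQ0]]]]] := @tr_coef a n e Q e hQ ltac:(lia).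
    rewrite hQ0 // addr0 addnK in eQ0.
    case: (posnP k) => [k0 | kpos].
    * subst k.
      rewrite !subn0 big_nat1 addKn eP0 eQ0.
      exists (q0 * r0); split; first exact: mulr_gt0.
      exists 0; split; first exact: ova0.
      split => //.
      rewrite -form_conv -toFM; congr toF.
      rewrite rCM addr0.
      have -> : (m + n - 1 = (m - 1) + (n - 1) + 1)%N by lia.
      rewrite !exprD expr1; ring.
    * rewrite big_nat_recr /=; last lia.
      rewrite big_ltn; last lia.
      have -> : (d + e - k - (d - k) = e)%N by lia.
      have -> : (d + e - k - d = e - k)%N by lia.
      have [qk [hqk [Pk [hPk [_ ePk]]]]] := @tr_coef a m d P (d - k) hP ltac:(lia).
      have ek : (a + (d - k) - d = a - k)%N by lia.
      rewrite ek in ePk hPk.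
      have [rk [hrk [Qk [hQk [_ eQk]]]]] := @tr_coef a n e Q (e - k) hQ ltac:(lia).
      have ek' : (a + (e - k) - e = a - k)%N by lia.
      rewrite ek' in eQk hQk.
      set S := \sum_(_ <= _ < _) _.
      have [s [hs ->]] : Aset a (a - k) S.
        rewrite /S big_nat_cond; apply: (big_ind (Aset a (a - k))).
        - by exists 0; split; [exact: ova0 | rewrite toF0].
        - move=> x y [p [hp ->]] [p' [hp' ->]].
          by exists (p + p'); split; [exact: ovaD | rewrite toFD].
        - move=> j /andP [/andP [hj1 hj2] _].
          have [p [hp ->]] := @trAset a m d P j (a - k) hP ltac:(lia) ltac:(lia).
          have [p' [hp' ->]] :=
            @trAset a n e Q (d + e - k - j) (a - k) hQ ltac:(lia) ltac:(lia).
          by exists (p * p'); split; [exact: ovaM | rewrite toFM].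
      have hU : only_vars_above (a - k) (u a a) by apply: ovaX; lia.
      exists (q0 * rk + qk * r0); split.
        by apply: addr_gt0; apply: mulr_gt0.
      exists (Pk * (rC a r0 * (u a a ^+ (n - 1) * u a a)) + s +
              rC a q0 * (u a a ^+ (m - 1) * u a a) * Qk).
      split.
        apply: ovaD; first apply: ovaD => //.
          by apply: ovaM => //; apply: ovaM; [exact: ovaC | apply: ovaM => //; exact: ovaXn].
        apply: ovaM => //; apply: ovaM; [exact: ovaC | apply: ovaM => //; exact: ovaXn].
      split; first by move=> h; exfalso; lia.
      rewrite -form_conv eP0 eQk ePk eQ0 -!toFM -!toFD; congr toF.
      rewrite rCD !rCM.
      have -> : (m + n - 1 = (m - 1) + (n - 1) + 1)%N by lia.
      rewrite !exprD expr1; ring.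
Qed.
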